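(* Let $\mathcal{H}_S\cong\mathbb{C}^d$ (system) and $\mathcal{H}_E$ (environment) be finite-dimensional Hilbert spaces, let $\eta$ be a density operator on $\mathcal{H}_E$, and let $U_1,U_2$ be unitaries on $\mathcal{H}_S\otimes\mathcal{H}_E$ describing the joint evolution from time $r$ to time $s$ and from time $s$ to time $t$ ($r<s<t$), respectively. Define the linear maps on $\mathcal{B}(\mathcal{H}_S)$ $$\Lambda_{s:r}(X)=\operatorname{tr}_E[U_1(X\otimes\eta)U_1^\dagger],\qquad \Lambda_{t:r}(X)=\operatorname{tr}_E[U_2U_1(X\otimes\eta)U_1^\dagger U_2^\dagger],$$ and, for each density operator $\rho$ on $\mathcal{H}_S$, $\eta_s(\rho):=\operatorname{tr}_S[U_1(\rho\otimes\eta)U_1^\dagger]$ and $\Lambda^{(\rho)}_{t:s}(\sigma):=\operatorname{tr}_E[U_2(\sigma\otimes\eta_s(\rho))U_2^\dagger]$. Suppose the process is oCP-divisible, i.e. $\Lambda^{(\rho)}_{t:s}$ is the same map $\Lambda_{t:s}$ for every density operator $\rho$, and $\Lambda_{t:r}=\Lambda_{t:s}\circ\Lambda_{s:r}$. If in addition $\Lambda_{s:r}$ is invertible as a linear map on $\mathcal{B}(\mathcal{H}_S)$, then the map $\Phi_{t:s}:=\Lambda_{t:r}\circ\Lambda_{s:r}^{-1}$ is completely positive, i.e. the process is also iCP-divisible.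
   Context: $\operatorname{tr}_E$ and $\operatorname{tr}_S$ denote partial traces over environment and system. The map $\Lambda^{(\rho)}_{t:s}$ describes the system dynamics from $s$ to $t$ when the system was prepared in $\rho$ at time $r$, discarded just before $s$ and replaced by a fresh state $\sigma$ at $s$. ''iCP-divisible'' (CP divisible by inversion) means: $\Lambda_{s:r}$ is invertible and $\Lambda_{t:r}\circ\Lambda_{s:r}^{-1}$ is completely positive. *)

(* Defs.v *)
(* Finite-dimensional quantum mechanics over an abstract
   numClosedFieldType C (the library's structure for complex-like fields;
   the complex numbers are an instance).  Matrices 'M[C]_n model B(C^n);
   tensor products use the Kronecker product [tensmx] of mathcomp-real-closed,
   with the index convention of [mxtens_index] (system index first). *)
From HB Require Import structures.
From mathcomp Require Import all_boot all_order all_algebra.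
From mathcomp Require Import mxtens.
Set Implicit Arguments.
Unset Strict Implicit.
Unset Printing Implicit Defensive.
Import Order.TTheory GRing.Theory Num.Theory.
Local Open Scope ring_scope.

Section QDefs.
Context {C : numClosedFieldType}.

Definition adjmx {m n} (A : 'M[C]_(m, n)) : 'M[C]_(n, m) := map_mx Num.conj (A^T).

Definition unitary {n} (U : 'M[C]_n) : Prop := U *m adjmx U = 1%:M.

Definition psd {n} (A : 'M[C]_n) : Prop :=
  adjmx A = A /\ forall v : 'cV[C]_n, 0 <= (adjmx v *m A *m v) ord0 ord0.

Definition density {n} (rho : 'M[C]_n) : Prop := psd rho /\ \tr rho = 1.

Definition ptrE {d e} (M : 'M[C]_(d * e)) : 'M[C]_d :=
  \matrix_(i, j) \sum_(k < e) M (mxtens_index (i, k)) (mxtens_index (j, k)).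

Definition ptrS {d e} (M : 'M[C]_(d * e)) : 'M[C]_e :=
  \matrix_(k, l) \sum_(i < d) M (mxtens_index (i, k)) (mxtens_index (i, l)).

Definition blockmx {k d} (X : 'M[C]_(k * d)) (a b : 'I_k) : 'M[C]_d :=
  \matrix_(i, j) X (mxtens_index (a, i)) (mxtens_index (b, j)).

(* ampliation id_k (x) Phi *)
Definition ampl {d} (k : nat) (Phi : 'M[C]_d -> 'M[C]_d) (X : 'M[C]_(k * d))
  : 'M[C]_(k * d) :=
  \sum_(a < k) \sum_(b < k) tensmx (delta_mx a b : 'M[C]_k) (Phi (blockmx X a b)).

Definition completely_positive {d} (Phi : 'M[C]_d -> 'M[C]_d) : Prop :=
  forall (k : nat) (X : 'M[C]_(k * d)), psd X -> psd (ampl Phi X).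

Definition Lsr {d e} (eta : 'M[C]_e) (U1 : 'M[C]_(d * e)) (X : 'M[C]_d) : 'M[C]_d :=
  ptrE (U1 *m tensmx X eta *m adjmx U1).

Definition Ltr {d e} (eta : 'M[C]_e) (U1 U2 : 'M[C]_(d * e)) (X : 'M[C]_d)
  : 'M[C]_d :=
  ptrE (U2 *m U1 *m tensmx X eta *m adjmx U1 *m adjmx U2).

Definition eta_s {d e} (eta : 'M[C]_e) (U1 : 'M[C]_(d * e)) (rho : 'M[C]_d)
  : 'M[C]_e :=
  ptrS (U1 *m tensmx rho eta *m adjmx U1).

Definition Lts_rho {d e} (eta : 'M[C]_e) (U1 U2 : 'M[C]_(d * e)) (rho : 'M[C]_d)
  (sigma : 'M[C]_d) : 'M[C]_d :=
  ptrE (U2 *m tensmx sigma (eta_s eta U1 rho) *m adjmx U2).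

End QDefs.

(* Main.v *)
Require Import Defs.
From HB Require Import structures.
From mathcomp Require Import all_boot all_order all_algebra.
From mathcomp Require Import mxtens.
Import GRing.Theory Num.Theory.
Local Open Scope ring_scope.

Section Aux.
Context {C : numClosedFieldType}.

Lemma adjmxE m n (A : 'M[C]_(m, n)) i j : adjmx A i j = (A j i)^*.
Proof. by rewrite !mxE. Qed.

Lemma adjmxK m n (A : 'M[C]_(m, n)) : adjmx (adjmx A) = A.
Proof. by apply/matrixP => i j; rewrite !adjmxE conjCK. Qed.

Lemma adjmx_mul m n p (A : 'M[C]_(m, n)) (B : 'M[C]_(n, p)) :
  adjmx (A *m B) = adjmx B *m adjmx A.
Proof. by rewrite /adjmx trmx_mul map_mxM. Qed.

Lemma adjmx_sum (I : finType) m n (F : I -> 'M[C]_(m, n)) :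
  adjmx (\sum_i F i) = \sum_i adjmx (F i).
Proof.
apply/matrixP => i j; rewrite adjmxE !summxE rmorph_sum.
by apply: eq_bigr => t _; rewrite adjmxE.
Qed.

Lemma psd_congr n m (A : 'M[C]_(n, m)) (X : 'M[C]_m) :
  psd X -> psd (A *m X *m adjmx A).
Proof.
move=> [hX qX]; split.
  by rewrite !adjmx_mul adjmxK hX mulmxA.
move=> v; have := qX (adjmx A *m v).
by rewrite adjmx_mul adjmxK !mulmxA.
Qed.

Lemma psd_congr' n m (A : 'M[C]_(m, n)) (X : 'M[C]_m) :
  psd X -> psd (adjmx A *m X *m A).
Proof. by move=> /(@psd_congr _ _ (adjmx A)); rewrite adjmxK. Qed.

Lemma psd_sum (I : finType) n (F : I -> 'M[C]_n) :
  (forall i, psd (F i)) -> psd (\sum_i F i).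
Proof.
move=> hF; split.
  by rewrite adjmx_sum; apply: eq_bigr => i _; case: (hF i).
move=> v; rewrite mulmx_sumr mulmx_suml summxE.
by apply: sumr_ge0 => i _; case: (hF i) => _ ->.
Qed.

Lemma psd_gram m n (M : 'M[C]_(m, n)) : psd (adjmx M *m M).
Proof.
split; first by rewrite adjmx_mul adjmxK.
move=> v; rewrite !mulmxA -adjmx_mul -mulmxA mxE.
by apply: sumr_ge0 => i _; rewrite adjmxE mulrC mul_conjC_ge0.
Qed.

Lemma psd_size0 n (A : 'M[C]_n) : n = 0%N -> psd A.
Proof.
move=> n0; subst n; split; first by apply/matrixP => i; case: i.
by move=> v; rewrite mxE big_ord0.
Qed.

Lemma sum_only n (t : 'I_n) (F : 'I_n -> C) :
  (forall p, p != t -> F p = 0) -> \sum_p F p = F t.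
Proof.
move=> h; rewrite (bigD1 t) //= big1 ?addr0 // => p; exact: h.
Qed.

Lemma sum_tens m n (F : 'I_(m * n) -> C) :
  \sum_q F q = \sum_(a < m) \sum_(x < n) F (mxtens_index (a, x)).
Proof.
rewrite pair_big /= (reindex (@mxtens_index m n)) /=.
  by apply: eq_bigr => -[a x] _.
by exists (@mxtens_unindex m n) => i _; rewrite (mxtens_indexK, mxtens_unindexK).
Qed.


Lemma psd_fact n (A : 'M[C]_n) : psd A -> exists B : 'M[C]_n, A = adjmx B *m B.
Proof.
move=> [hA qA].
have nA : A \is normalmx by apply/normalmxP; change (A *m adjmx A = adjmx A *m A); rewrite hA.
set P := spectralmx A; set c := spectral_diag A.
have uP : P \is unitarymx := spectral_unitarymx A.
have hPP : P *m adjmx P = 1%:M by apply/unitarymxP.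
have eA : A = adjmx P *m diag_mx c *m P.
  by rewrite {1}(orthomx_spectralP nA) invmx_unitary.
have eD : diag_mx c = P *m A *m adjmx P.
  by rewrite eA !mulmxA hPP mul1mx -mulmxA hPP mulmx1.
have c0 : forall m, 0 <= c 0 m.
  move=> m; have := qA (\col_j (P m j)^*).
  have -> : c 0 m = diag_mx c m m by rewrite mxE eqxx mulr1n.
  rewrite eD !mxE; congr (0 <= _).
  apply: eq_bigr => j _; rewrite !mxE; congr (_ * _).
  by apply: eq_bigr => i _; rewrite !mxE conjCK.
set s := \row_m sqrtC (c 0 m).
exists (diag_mx s *m P).
suff hD : adjmx (diag_mx s) *m diag_mx s = diag_mx c.
  by rewrite adjmx_mul eA -!mulmxA (mulmxA (adjmx (diag_mx s))) hD.
apply/matrixP => i j; rewrite !mxE.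
rewrite (sum_only _ i); last first.
  by move=> p; rewrite !mxE eq_sym => /negbTE ->; rewrite mulr0n conjC0 mul0r.
rewrite adjmxE !mxE eqxx mulr1n; case: (eqVneq i j) => [eij|nij]; last first.
  by rewrite !mulr0n mulr0.
subst j; rewrite !mulr1n conj_Creal ?ger0_real ?sqrtC_ge0 //.
by rewrite -expr2 sqrtCK.
Qed.

Lemma adjmx_tens m n p q (A : 'M[C]_(m, n)) (B : 'M[C]_(p, q)) :
  adjmx (tensmx A B) = tensmx (adjmx A) (adjmx B).
Proof. by rewrite /adjmx trmx_tens map_mxT. Qed.

Lemma psd_tens m n (A : 'M[C]_m) (B : 'M[C]_n) :
  psd A -> psd B -> psd (tensmx A B).
Proof.
move=> /psd_fact [P ->] /psd_fact [Q ->].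
by rewrite -tensmx_mul -adjmx_tens; apply: psd_gram.
Qed.


Definition Ek d e (k : 'I_e) : 'M[C]_(d * e, d) :=
  \matrix_(p, x) (p == mxtens_index (x, k))%:R.
Definition Gi d e (i : 'I_d) : 'M[C]_(d * e, e) :=
  \matrix_(p, y) (p == mxtens_index (i, y))%:R.

Lemma ptrE_kraus d e (M : 'M[C]_(d * e)) :
  ptrE M = \sum_k adjmx (Ek d e k) *m M *m Ek d e k.
Proof.
apply/matrixP => i j; rewrite !mxE summxE; apply: eq_bigr => k _.
rewrite mxE (sum_only _ (mxtens_index (j, k))); last first.
  by move=> q nq; rewrite [Ek d e k q j]mxE (negbTE nq) mulr0.
rewrite [Ek d e k _ j]mxE eqxx mulr1 mxE (sum_only _ (mxtens_index (i, k))) ?adjmxE ?mxE ?eqxx.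
  by rewrite conjC1 mul1r.
by move=> p; rewrite adjmxE mxE => /negbTE ->; rewrite conjC0 mul0r.
Qed.

Lemma ptrS_kraus d e (M : 'M[C]_(d * e)) :
  ptrS M = \sum_i adjmx (Gi d e i) *m M *m Gi d e i.
Proof.
apply/matrixP => k l; rewrite !mxE summxE; apply: eq_bigr => i _.
rewrite mxE (sum_only _ (mxtens_index (i, l))); last first.
  by move=> q nq; rewrite [Gi d e i q l]mxE (negbTE nq) mulr0.
rewrite [Gi d e i _ l]mxE eqxx mulr1 mxE (sum_only _ (mxtens_index (i, k))) ?adjmxE ?mxE ?eqxx.
  by rewrite conjC1 mul1r.
by move=> p; rewrite adjmxE mxE => /negbTE ->; rewrite conjC0 mul0r.
Qed.


Definition Fm d e (B : 'M[C]_e) (m : 'I_e) : 'M[C]_(d * e, d) :=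
  \matrix_(p, z) (((mxtens_unindex p).1 == z)%:R * (B m (mxtens_unindex p).2)^*).

Lemma FmE d e (B : 'M[C]_e) m x y z :
  Fm d e B m (mxtens_index (x, y)) z = (x == z)%:R * (B m y)^*.
Proof. by rewrite mxE mxtens_indexK. Qed.

Lemma tens_kraus d e (B : 'M[C]_e) (s : 'M[C]_d) :
  tensmx s (adjmx B *m B) = \sum_m Fm d e B m *m s *m adjmx (Fm d e B m).
Proof.
apply/matrixP => p q.
case: (mxtens_indexP p) => x y; case: (mxtens_indexP q) => x' y'.
rewrite tensmxE summxE mxE mulr_sumr; apply: eq_bigr => m _.
rewrite [RHS]mxE (sum_only _ x'); last first.
  move=> z nz; rewrite [adjmx (Fm _ _ _ _) _ _]adjmxE FmE eq_sym (negbTE nz).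
  by rewrite mul0r conjC0 mulr0.
rewrite [adjmx (Fm _ _ _ _) _ _]adjmxE FmE eqxx mul1r conjCK.
rewrite [(Fm _ _ _ _ *m s) _ _]mxE (sum_only _ x).
  rewrite FmE eqxx mul1r adjmxE.
  by rewrite mulrA [s x x' * _]mulrC.
move=> z nz; rewrite FmE eq_sym (negbTE nz).
by rewrite !mul0r.
Qed.

Lemma ampl_entry d k (Phi : 'M[C]_d -> 'M[C]_d) (X : 'M[C]_(k * d)) a i b j :
  ampl Phi X (mxtens_index (a, i)) (mxtens_index (b, j)) = Phi (blockmx X a b) i j.
Proof.
rewrite /ampl summxE (sum_only _ a).
  rewrite summxE (sum_only _ b).
    by rewrite tensmxE mxE !eqxx mul1r.
  by move=> b' nb; rewrite tensmxE mxE eqxx eq_sym (negbTE nb) mul0r.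
move=> a' na; rewrite summxE big1 // => b' _.
by rewrite tensmxE mxE eq_sym (negbTE na) mul0r.
Qed.

Lemma ampl_ext d k (Phi Psi : 'M[C]_d -> 'M[C]_d) (X : 'M[C]_(k * d)) :
  Phi =1 Psi -> ampl Phi X = ampl Psi X.
Proof.
move=> h; rewrite /ampl; apply: eq_bigr => a _; apply: eq_bigr => b _.
by rewrite h.
Qed.

Lemma id_entry k (a b : 'I_k) : (1%:M : 'M[C]_k) a b = (a == b)%:R.
Proof. by rewrite mxE. Qed.

Lemma ampl_kraus (T : finType) d k (K : T -> 'M[C]_d) (X : 'M[C]_(k * d)) :
  ampl (fun s => \sum_t K t *m s *m adjmx (K t)) X =
  \sum_t tensmx (1%:M : 'M[C]_k) (K t) *m X *m adjmx (tensmx (1%:M : 'M[C]_k) (K t)).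
Proof.
apply/matrixP => p q.
case: (mxtens_indexP p) => a i; case: (mxtens_indexP q) => b j.
rewrite ampl_entry !summxE; apply: eq_bigr => t _.
rewrite [RHS]mxE sum_tens (sum_only _ b); last first.
  move=> b' nb; apply: big1 => x' _.
  rewrite [adjmx (_ *t _) _ _]adjmxE tensmxE id_entry eq_sym (negbTE nb).
  by rewrite mul0r conjC0 mulr0.
rewrite mxE; apply: eq_bigr => x' _.
rewrite [adjmx (_ *t _) _ _]adjmxE tensmxE id_entry eqxx mul1r adjmxE.
rewrite [(_ *m blockmx _ _ _) _ _]mxE [(_ *m X) _ _]mxE sum_tens (sum_only _ a).
  congr (_ * _); apply: eq_bigr => x _.
  by rewrite tensmxE id_entry eqxx mul1r mxE.
move=> a' na; apply: big1 => x _.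
by rewrite tensmxE id_entry eq_sym (negbTE na) !mul0r.
Qed.

End Aux.

Theorem mainTheorem1 (C : numClosedFieldType) (d e : nat)
  (eta : 'M[C]_e) (U1 U2 : 'M[C]_(d * e)) :
  density eta -> unitary U1 -> unitary U2 ->
  (* oCP-divisibility *)
  (exists Lts : 'M[C]_d -> 'M[C]_d,
      (forall rho : 'M[C]_d, density rho -> Lts_rho eta U1 U2 rho =1 Lts) /\
      Ltr eta U1 U2 =1 Lts \o Lsr eta U1) ->
  (* Lambda_{s:r} invertible, with inverse Linv *)
  forall Linv : 'M[C]_d -> 'M[C]_d,
    cancel (Lsr eta U1) Linv -> cancel Linv (Lsr eta U1) ->
    completely_positive (Ltr eta U1 U2 \o Linv).
Proof.
move=> hEta hU1 hU2 [Lts [hrho hcomp]] Linv hLK hKL k X hX.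
have hPhi : (Ltr eta U1 U2 \o Linv) =1 Lts.
  by move=> Y /=; rewrite hcomp /= hKL.
case: (posnP d) => [d0|dpos].
  by apply: psd_size0; rewrite d0 muln0.
pose i0 := Ordinal dpos.
pose rho0 : 'M[C]_d := delta_mx i0 i0.
have ad : adjmx rho0 = rho0.
  apply/matrixP => i j; rewrite adjmxE !mxE conjC_nat.
  by rewrite andbC.
have hrho0 : density rho0.
  split; last first.
    rewrite /mxtrace (sum_only _ i0) ?mxE ?eqxx //.
    by move=> p np; rewrite mxE (negbTE np).
  by rewrite /rho0 -(mul_delta_mx i0) -/rho0 -{1}ad; apply: psd_gram.
have hes : psd (eta_s eta U1 rho0).
  rewrite /eta_s ptrS_kraus; apply: psd_sum => i; apply: psd_congr'.
  by apply: psd_congr; apply: psd_tens; [exact: hrho0.1 | exact: hEta.1].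
have [B hB] := psd_fact _ _ hes.
pose K := fun t : 'I_e * 'I_e => adjmx (Ek d e t.1) *m U2 *m Fm d e B t.2.
have hL : forall s, Lts s = \sum_t K t *m s *m adjmx (K t).
  move=> s; rewrite -(hrho rho0 hrho0 s) /Lts_rho hB tens_kraus ptrE_kraus.
  rewrite -(pair_big xpredT xpredT (fun i j => K (i, j) *m s *m adjmx (K (i, j)))) /=.
  apply: eq_bigr => kk _.
  rewrite mulmx_sumr mulmx_suml mulmx_sumr mulmx_suml; apply: eq_bigr => m _.
  by rewrite /K !adjmx_mul adjmxK !mulmxA.
rewrite (ampl_ext _ _ _ _ X (fun Y => etrans (hPhi Y) (hL Y))) ampl_kraus.
by apply: psd_sum => t; apply: psd_congr.
Qed.
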